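(* Let $n\ge2$, let $\mathcal T_n$ be the set of rooted trees with vertices labeled $1,\dots,n$, and let $\sigma_1,\dots,\sigma_{n-1}:\mathcal T_n\to\mathcal T_n$ be the maps defined in the context. Let $\delta_n=\sigma_1\sigma_2\cdots\sigma_{n-1}$ (apply $\sigma_{n-1}$ first). Then for every $T\in\mathcal T_n$, $\delta_nT=T^+$, where $T^+$ is the tree obtained from $T$ by increasing every label by $1$ modulo $n$ (so label $n$ becomes $1$). In particular $\delta_n\sigma_iT=\sigma_{i+1}\delta_nT$ for all $T$ and all $1\le i\le n-2$.
   Context: Write $v_i$ for the vertex labeled $i$ of $T\in\mathcal T_n$. Definition of $\sigma_iT$ for $1\le i\le n-1$: if $v_{i+1}$ is the root of $T$, then $\sigma_iT$ is $T$ with labels $i$ and $i+1$ interchanged. Otherwise form $T_+$ by adding a new vertex $v_0$ as parent of the root, and write $a\to b$ if $a$ is the parent of $b$ in $T_+$; then: (0) if neither of $v_i,v_{i+1}$ is the parent of the other and they do not have the same parent, $\sigma_iT$ is $T$ with labels $i,i+1$ interchanged; (1) if $v_k\to v_i\to v_{i+1}$, then $\sigma_iT$ has $v_k\to v_{i+1}\to v_i$, and all other parent-child relations (in particular the other children of $v_i$ and of $v_{i+1}$) are unchanged; (2) if $v_k\to v_{i+1}\to v_i$, then in $\sigma_iT$ both $v_i$ and $v_{i+1}$ are children of $v_k$, the sets of other children of $v_i$ and of $v_{i+1}$ are interchanged, and all other relations are unchanged; (3) if $v_i,v_{i+1}$ have the same parent $v_k$, then first the sets of children of $v_i$ and $v_{i+1}$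 are interchanged and then $v_{i+1}$ is made a child of $v_i$, so $v_k\to v_i\to v_{i+1}$. In cases (1)-(3), deleting $v_0$ gives $\sigma_iT\in\mathcal T_n$ whose root is the child of $v_0$. *)

(* Defs.v *)
From mathcomp Require Import all_boot.
Set Implicit Arguments. Unset Strict Implicit. Unset Printing Implicit Defensive.

(* Vertex j : 'I_n carries the label j+1
   (labels 1..n).  A tree is given by its parent function in T_+ :
   p x = Some y  means y is the parent of x,
   p x = None    means the parent of x is the extra vertex v_0, i.e. x is the root. *)
Definition ptree (n : nat) := {ffun 'I_n -> option 'I_n}.

Definition is_rooted_tree (n : nat) (p : ptree n) : Prop :=
  #|[set x | p x == None]| = 1 /\
  (forall x : 'I_n, exists k, iter k (fun o => obind p o) (Some x) = None).

Definition swapv (n : nat) (a b : 'I_n) (x : 'I_n) : 'I_n :=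
  if x == a then b else if x == b then a else x.

(* the tree with labels permuted by the involution f *)
Definition relabel (n : nat) (f : 'I_n -> 'I_n) (p : ptree n) : ptree n :=
  [ffun x => omap f (p (f x))].

(* sigma_i (1 <= i <= n-1) acting on labels i, i+1, i.e. on the vertices
   a := ordinal (i-1) and b := ordinal i.  (Identity if i is out of range.) *)
Definition sigma (n : nat) (i : nat) (p : ptree n) : ptree n :=
  match (insub i.-1 : option 'I_n), (insub i : option 'I_n) with
  | Some a, Some b =>
    if (i == 0) then p else
    if p b == None then relabel (swapv a b) p
    else if p b == Some a then                           (* case (1): v_k -> v_i -> v_{i+1} *)
      [ffun x => if x == b then p a else if x == a then Some b else p x]
    else if p a == Some b then                           (* case (2): v_k -> v_{i+1} -> v_i *)
      [ffun x => if x == a then p b else if x == b then p b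
                 else omap (swapv a b) (p x)]
    else if p a == p b then                              (* case (3): same parent v_k *)
      [ffun x => if x == b then Some a else if x == a then p a
                 else omap (swapv a b) (p x)]
    else relabel (swapv a b) p
  | _, _ => p
  end.

Definition delta (n : nat) (p : ptree n) : ptree n :=
  foldr (@sigma n) p (iota 1 n.-1).

Definition tplus (n : nat) (p : ptree n) : ptree n :=
  [ffun x => omap (@ordS n) (p (@ord_pred n x))].

(* Main.v *)
Require Import Defs.
From mathcomp Require Import all_boot.
From mathcomp Require Import zify.
Set Implicit Arguments. Unset Strict Implicit. Unset Printing Implicit Defensive.

Definition nstep n (u w : 'I_n) (s : ptree n) : ptree n :=
 [ffun x => if s w == None then s x
  else if s w == Some u then
    (if x == w then s x else if s x == Some u then Some w
     else if s x == Some w then Some u else s x)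
  else if s u == Some w then (if x == u then s w else s x)
  else if s u == s w then (if x == u then Some w else s x)
  else s x].

Lemma omap_inj n (f : 'I_n -> 'I_n) : injective f -> injective (omap f).
Proof. by move=> fi [a|] [b|] //= [] /fi ->. Qed.

Lemma sigma_step n i (q s : ptree n) (pi : 'I_n -> 'I_n) (u w : 'I_n) :
  0 < i -> val (pi u) = i.-1 -> val (pi w) = i -> injective pi ->
  (forall x, q (pi x) = omap pi (s x)) ->
  s w != Some w -> s u != Some u -> (s w == Some u) ==> (s u != Some w) ->
  forall x, sigma i q (swapv (pi u) (pi w) (pi x)) =
            omap (swapv (pi u) (pi w) \o pi) (nstep u w s x).
Proof.
move=> i0 Hu Hw pinj Hq sw su s2 x.
have uw : u != w by apply/eqP=> E; move: Hu Hw; rewrite E => ->; lia.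
have oinj := omap_inj pinj.
have Esw : forall y, swapv (pi u) (pi w) (pi y) = pi (swapv u w y).
  by move=> y; rewrite /swapv !(inj_eq pinj); case: eqP => // _; case: eqP.
have Eo : forall o, omap (swapv (pi u) (pi w) \o pi) o = omap pi (omap (swapv u w) o).
  by case=> //= y; rewrite Esw.
have i0' : (i == 0) = false by case: i i0 {Hu Hw}.
have Eo' : forall o, omap (swapv (pi u) (pi w)) (omap pi o) = omap pi (omap (swapv u w) o).
  by case=> //= y; rewrite Esw.
have Ia : insub i.-1 = Some (pi u) by rewrite -Hu valK.
have Ib : insub i = Some (pi w) by rewrite -Hw valK.
have swu : swapv u w u = w by rewrite /swapv eqxx.
have sww : swapv u w w = u by rewrite /swapv eqxx eq_sym (negbTE uw).
have swo : forall y, y != u -> y != w -> swapv u w y = y.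
  by move=> y /negbTE a /negbTE b; rewrite /swapv a b.
have Ea := Hq u; have Eb := Hq w.
rewrite Eo Esw /sigma Ia Ib i0' Ea Eb.
rewrite -[None]/(omap pi None) -[Some (pi u)]/(omap pi (Some u)) -[Some (pi w)]/(omap pi (Some w)).
rewrite !(inj_eq oinj) /nstep ffunE.
have hlp : forall o, o != Some u -> o != Some w -> omap (swapv u w) o = o.
  by case=> //= y a b; rewrite swo //; apply: contraNneq a => ->.
have s2' : s w = Some u -> s u != Some w by move=> E; move: s2; rewrite E eqxx.
have pn : forall y z, (pi y == pi z) = (y == z) by move=> y z; rewrite (inj_eq pinj).
case: (eqVneq (s w) None) => [Hn|Hn] /=; [|case: (eqVneq (s w) (Some u)) => [H1|H1] /=;
  [|case: (eqVneq (s u) (Some w)) => [H2|H2] /=; [| case: (eqVneq (s u) (s w)) => [H3|H3] /=]]];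
 rewrite /relabel ffunE;
 (case: (eqVneq x u) => [->|xu]; [| case: (eqVneq x w) => [->|xw]]);
 rewrite ?swu ?sww ?swo // ?pn ?eqxx ?(negbTE uw) ?(eq_sym w u) ?(negbTE uw) ?(negbTE xu) ?(negbTE xw) ?Esw ?swu ?sww ?swo // ?Hq ?Eo' ?swu ?sww.
all: try done.
all: try (congr (omap pi _)).
all: try (by rewrite hlp // -?H3 ?H1 // s2').
- by rewrite (negbTE su) (negbTE (s2' H1)) hlp // s2'.
- by rewrite H1 /= swu.
- case: (eqVneq (s x) (Some u)) => [E|a] /=; first by rewrite E sww.
  by case: (eqVneq (s x) (Some w)) => [E|b] /=; rewrite ?E ?swu // hlp.
- by rewrite /= sww.
Qed.

Definition Sm n (w : 'I_n) (p : ptree n) (m : nat) : ptree n :=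
 [ffun x => if p w is Some k then
   if x == w then p x else if p x == Some w then (if (m <= x) (+) (m <= k) then Some k else Some w)
   else if p x == Some k then (if (m <= x) (+) (m <= k) then Some w else Some k) else p x
  else p x].

Lemma oeq (T : eqType) (a b : T) : (Some a == Some b) = (a == b).
Proof. by []. Qed.

Lemma Sm_step n (w u : 'I_n) (p : ptree n) :
 u != w -> (forall x, p x != Some x) -> (forall x y, p x = Some y -> p y != Some x) ->
 forall x, nstep u w (Sm w p u.+1) x = Sm w p u x.
Proof.
move=> uw nl n2 x.
rewrite /nstep /Sm !ffunE.
case Hpw: (p w) => [k|]; last by rewrite eqxx.
rewrite eqxx (negbTE uw) /=.
have kw : k != w by apply/eqP => E; move: (nl w); rewrite Hpw E eqxx.
have pkw : p k != Some w by apply: n2.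
have pkk : p k != Some k by apply: nl.
have puu : p u != Some u by apply: nl.
case: (eqVneq k u) => [ku|ku].
  subst k; rewrite eqxx /=.
  case: (eqVneq x w) => [->|xw] //=.
  case: (eqVneq x u) => [->|xu] /=; first by rewrite ?(negbTE pkw) ?(negbTE pkk) /= ?(negbTE pkw) ?(negbTE pkk).
  have E : (u < x) = (u <= x) by rewrite ltn_neqAle eq_sym (inj_eq val_inj) xu.
  rewrite ltnn leqnn E addbF addbT.
  have wu : (w == u) = false by rewrite eq_sym (negbTE uw).
  case: (eqVneq (p x) (Some w)) => [Ea|a] /=.
    by case: (u <= x); rewrite /= ?oeq ?oeq ?eqxx ?wu ?(negbTE uw).
  case: (eqVneq (p x) (Some u)) => [Eb|b] /=.
    by case: (u <= x); rewrite /= ?oeq ?eqxx ?wu ?(negbTE uw).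
  by rewrite (negbTE a) (negbTE b).
have E1 : (u < k) = (u <= k) by rewrite ltn_neqAle (inj_eq val_inj) (eq_sym u k) ku.
rewrite /= oeq (negbTE ku).
case: (eqVneq x u) => [->|xu].
  rewrite ?eqxx (negbTE uw) ltnn leqnn /= E1.
  have wk : (w == k) = false by rewrite eq_sym (negbTE kw).
  case: (eqVneq (p u) (Some w)) => [Ea|a] /=.
    by case: (u <= k); rewrite /= ?oeq ?eqxx ?wk ?(negbTE kw).
  case: (eqVneq (p u) (Some k)) => [Eb|b] /=.
    by case: (u <= k); rewrite /= ?oeq ?eqxx ?wk ?(negbTE kw).
  by rewrite (negbTE a) (negbTE b).
have E : (u < x) = (u <= x) by rewrite ltn_neqAle (inj_eq val_inj) (eq_sym u x) xu.
by rewrite !if_same E1 E.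
Qed.

Lemma Sm_w n (w : 'I_n) p m : Sm w p m w = p w.
Proof. by rewrite /Sm ffunE eqxx; case: (p w). Qed.

Lemma Sm_hyp n (w u : 'I_n) (p : ptree n) m :
 u != w -> (forall x, p x != Some x) -> (forall x y, p x = Some y -> p y != Some x) ->
 Sm w p m u != Some u /\ ((Sm w p m w == Some u) ==> (Sm w p m u != Some w)).
Proof.
move=> uw nl n2; rewrite Sm_w /Sm ffunE (negbTE uw).
case Hpw: (p w) => [k|]; last by rewrite nl.
have kw : k != w by apply/eqP => E; move: (nl w); rewrite Hpw E eqxx.
have pkw : p k != Some w by apply: n2.
have pkk : p k != Some k by apply: nl.
rewrite oeq.
case: (eqVneq k u) => [ku|ku] /=.
  subst k. by rewrite (negbTE pkw) (negbTE pkk).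
split; last by [].
case: (p u == Some w); first by case: (_ (+) _); rewrite oeq // eq_sym.
case: (p u == Some k); first by case: (_ (+) _); rewrite oeq // eq_sym (negbTE uw).
exact: nl.
Qed.

Definition pim n (w : 'I_n) (i : nat) (x : 'I_n) : 'I_n :=
  if x == w then insubd w i.-1 else if i.-1 <= x then insubd w x.+1 else x.

Lemma val_pim n (w : 'I_n) i x : 1 <= i <= n -> (w : nat) = n.-1 ->
  val (pim w i x) = if x == w then i.-1 else if i.-1 <= x then x.+1 else x.
Proof.
move=> /andP[i1 iN] Hw; rewrite -subn1 in Hw; rewrite /pim -subn1.
case: (eqVneq x w) => [_|xw]; first by rewrite val_insubd; case: ifP => //; lia.
case: ifP => // _; rewrite val_insubd; case: ifP => // /negbT.
have : (x : nat) != w by rewrite (inj_eq val_inj).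
have := ltn_ord x. lia.
Qed.

Lemma pim_inj n (w : 'I_n) i : 1 <= i <= n -> (w : nat) = n.-1 -> injective (pim w i).
Proof.
move=> hi Hw x y E; move: (congr1 val E); rewrite !val_pim //.
have := ltn_ord x; have := ltn_ord y.
case: (eqVneq x w) => [->|xw]; case: (eqVneq y w) => [->|yw] //.
- have : (y : nat) != w by rewrite (inj_eq val_inj).
  case: ifP; lia.
- have : (x : nat) != w by rewrite (inj_eq val_inj).
  case: ifP; lia.
- move=> _ _ E'; apply: ord_inj; move: E'; by repeat case: ifP; lia.
Qed.

Lemma swap_pim n (w : 'I_n) i y : (w : nat) = n.-1 -> 1 <= i -> i < n ->
  swapv (pim w i.+1 (insubd w i.-1)) (pim w i.+1 w) (pim w i.+1 y) = pim w i y.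
Proof.
move=> Hw i1 iN.
set u := insubd w i.-1.
have Vu : (u : nat) = i.-1 by rewrite /u val_insubd; case: ifP => //; lia.
have uw : u != w by apply/eqP => E; move: Vu; rewrite E Hw; lia.
have V : forall z, (pim w i.+1 z : nat) = if z == w then i else if i <= z then z.+1 else z.
  by move=> z; rewrite val_pim //; apply/andP; split.
have V' : forall z, (pim w i z : nat) = if z == w then i.-1 else if i.-1 <= z then z.+1 else z.
  by move=> z; rewrite val_pim //; apply/andP; split => //; apply: ltnW.
have yn := ltn_ord y.
apply: ord_inj; rewrite /swapv.
case: ifP => [/eqP E1|/eqP N1]; [|case: ifP => [/eqP E2|/eqP N2]].
- move: (congr1 (@nat_of_ord n) E1); rewrite !V V' (negbTE uw) eqxx Vu.
  case: (eqVneq y w) => [_|yw]; first by repeat case: ifP; lia.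
  have : (y : nat) != w by rewrite (inj_eq val_inj).
  by repeat case: ifP; lia.
- move: (congr1 (@nat_of_ord n) E2); rewrite !V V' (negbTE uw) eqxx Vu.
  case: (eqVneq y w) => [_|yw]; first by repeat case: ifP; lia.
  have : (y : nat) != w by rewrite (inj_eq val_inj).
  by repeat case: ifP; lia.
- have N1' : (pim w i.+1 y : nat) <> pim w i.+1 u := fun h => N1 (ord_inj h).
  have N2' : (pim w i.+1 y : nat) <> pim w i.+1 w := fun h => N2 (ord_inj h).
  move: N1' N2'; rewrite !V V' (negbTE uw) eqxx Vu.
  case: (eqVneq y w) => [_|yw]; first by repeat case: ifP; lia.
  have : (y : nat) != w by rewrite (inj_eq val_inj).
  by repeat case: ifP; lia.
Qed.

Lemma Sm_top n (w : 'I_n) p x : (w : nat) = n.-1 -> Sm w p n.-1 x = p x.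
Proof.
move=> Hw; rewrite /Sm ffunE.
case Hpw: (p w) => [k|] //.
case: (eqVneq x w) => [_|xw] //=.
have xn := ltn_ord x; have kn := ltn_ord k.
have : (x : nat) != w by rewrite (inj_eq val_inj).
move=> xw'.
have -> : (n.-1 <= x) = false by apply/negbTE; lia.
case: (eqVneq k w) => [E|kw].
  subst k; rewrite Hw leqnn /=.
  by case: (eqVneq (p x) (Some w)) => [E|a] //=; rewrite ?E // (negbTE a).
have : (k : nat) != w by rewrite (inj_eq val_inj).
move=> kw'; have -> : (n.-1 <= k) = false by apply/negbTE; lia.
case: (eqVneq (p x) (Some w)) => [E|a] /=; [by rewrite E|].
by case: (eqVneq (p x) (Some k)) => [E|b] /=; [rewrite E|].
Qed.

Lemma Sm_bot n (w : 'I_n) p x : Sm w p 0 x = p x.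
Proof.
rewrite /Sm ffunE; case Hpw: (p w) => [k|] //.
case: (eqVneq x w) => [_|xw] //=.
case: (eqVneq (p x) (Some w)) => [E|a] /=; [by rewrite E|].
by case: (eqVneq (p x) (Some k)) => [E|b] /=; [rewrite E|].
Qed.

Lemma chain n (w : 'I_n) (p : ptree n) : (w : nat) = n.-1 ->
 (forall x, p x != Some x) -> (forall x y, p x = Some y -> p y != Some x) ->
 forall d i, i + d = n -> 1 <= i -> forall x,
 foldr (@sigma n) p (iota i d) (pim w i x) = omap (pim w i) (Sm w p i.-1 x).
Proof.
move=> Hw nl n2; elim=> [|d IH] i Hid i1 x.
  rewrite addn0 in Hid; subst i => /=.
  have P : forall y, pim w n y = y.
    move=> y; apply: ord_inj; rewrite val_pim ?leqnn ?andbT //.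
    case: (eqVneq y w) => [->|yw] //.
    have : (y : nat) != w by rewrite (inj_eq val_inj).
    have := ltn_ord y; case: ifP => //; lia.
  by rewrite P Sm_top //; case: (p x) => //= y; rewrite P.
have iN : i < n by lia.
set u := insubd w i.-1.
have Vu : (u : nat) = i.-1 by rewrite /u val_insubd; case: ifP => //; lia.
have uw : u != w by apply/eqP => E; move: Vu; rewrite E Hw; lia.
have hi : 1 <= i.+1 <= n by apply/andP.
have Hq := IH i.+1 ltac:(lia) isT.
have [H1 H2] := Sm_hyp i uw nl n2.
have H0 : Sm w p i w != Some w by rewrite Sm_w nl.
have := sigma_step (pi := pim w i.+1) (q := foldr (@sigma n) p (iota i.+1 d)) i1 _ _ (pim_inj hi Hw) Hq H0 H1 H2 x.
have E1 : val (pim w i.+1 u) = i.-1.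
  by rewrite /= val_pim // (negbTE uw) Vu; case: ifP => //; lia.
have E2 : val (pim w i.+1 w) = i by rewrite /= val_pim // eqxx.
move=> /(_ E1 E2).
have Eo : forall o, omap (swapv (pim w i.+1 u) (pim w i.+1 w) \o pim w i.+1) o = omap (pim w i) o.
  by case=> //= z; rewrite swap_pim.
have -> : i.+1.-1 = (u : nat).+1 by rewrite Vu; lia.
rewrite Eo Sm_step // Vu swap_pim //= => <-.
Qed.

Definition acyc n (p : ptree n) :=
  forall x : 'I_n, exists k, iter k (fun o => obind p o) (Some x) = None.

Lemma acyc_n2 n (p : ptree n) : acyc p -> forall x y, p x = Some y -> p y != Some x.
Proof.
move=> ac x y pxy; apply/eqP => pyx.
have H : forall k, iter k (fun o => obind p o) (Some x) \in [:: Some x; Some y].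
  elim=> [|k IH] /=; first by rewrite inE eqxx.
  move: IH; rewrite !inE => /orP[] /eqP -> /=; by rewrite ?pxy ?pyx eqxx ?orbT.
have [k Hk] := ac x; move: (H k); by rewrite Hk.
Qed.

Lemma acyc_nl n (p : ptree n) : acyc p -> forall x, p x != Some x.
Proof. move=> ac x; apply/eqP => E; move: (acyc_n2 ac E); by rewrite E eqxx. Qed.

Lemma iter_None n (s : ptree n) j : iter j (fun o => obind s o) None = None.
Proof. by elim: j => //= j ->. Qed.

Lemma acyc_wit n (s t : ptree n) : acyc s ->
  (forall x, exists j m, 0 < m /\ iter j (fun o => obind t o) (Some x) = iter m (fun o => obind s o) (Some x)) ->
  acyc t.
Proof.
move=> ac W.
suff P : forall k x, iter k (fun o => obind s o) (Some x) = None ->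
   exists j, iter j (fun o => obind t o) (Some x) = None.
  by move=> x; have [k Hk] := ac x; exact: P Hk.
elim/ltn_ind => k IH x Hk.
have [j [m [m0 Ej]]] := W x.
case: (leqP k m) => km.
  exists j; rewrite Ej -(subnK km) iterD Hk; exact: iter_None.
case Eo: (iter m (fun o => obind s o) (Some x)) => [y|]; last by exists j; rewrite Ej.
have : iter (k - m) (fun o => obind s o) (Some y) = None.
  by rewrite -Eo -iterD subnK // ltnW.
move=> /IH [|j' Hj']; first lia.
by exists (j' + j); rewrite iterD Ej Eo.
Qed.

Lemma acyc_nstep n (u w : 'I_n) (s : ptree n) : u != w -> acyc s -> acyc (nstep u w s).
Proof.
move=> uw ac; have nl := acyc_nl ac; have n2 := acyc_n2 ac.
apply: acyc_wit ac _ => x.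
have one : nstep u w s x = s x -> exists j m, 0 < m /\ iter j (fun o => obind (nstep u w s) o) (Some x) = iter m (fun o => obind s o) (Some x).
  by move=> E; exists 1, 1; rewrite /= E.
have wu : (w == u) = false by rewrite eq_sym (negbTE uw).
case: (eqVneq (s w) None) => [Hn|Hn].
  by apply: one; rewrite /nstep ffunE Hn eqxx.
case: (eqVneq (s w) (Some u)) => [H1|H1].
  case: (eqVneq x w) => [Ex|xw].
    by apply: one; rewrite /nstep ffunE Ex H1 !eqxx.
  case: (eqVneq (s x) (Some u)) => [Ha|Ha].
    exists 2, 1; split => //=.
    by rewrite /nstep !ffunE H1 !eqxx (negbTE xw) Ha eqxx /= ffunE eqxx.
  case: (eqVneq (s x) (Some w)) => [Hb|Hb].
    exists 1, 2; split => //=.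
    by rewrite /nstep !ffunE H1 !eqxx (negbTE xw) Hb oeq wu eqxx /= H1.
  by apply: one; rewrite /nstep ffunE H1 eqxx (negbTE xw) (negbTE Ha) (negbTE Hb) ?(negbTE Hn).
case: (eqVneq (s u) (Some w)) => [H2|H2].
  case: (eqVneq x u) => [Ex|xu].
    exists 1, 2; split => //=.
    by rewrite /nstep !ffunE (negbTE Hn) (negbTE H1) H2 eqxx Ex eqxx /= H2.
  by apply: one; rewrite /nstep ffunE (negbTE Hn) (negbTE H1) H2 eqxx (negbTE xu).
case: (eqVneq (s u) (s w)) => [H3|H3].
  case: (eqVneq x u) => [Ex|xu].
    exists 2, 1; split => //=.
    rewrite /nstep !ffunE (negbTE Hn) (negbTE H1) (negbTE H2) H3 eqxx Ex eqxx /=.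
    by rewrite ?ffunE ?wu.
  by apply: one; rewrite /nstep ffunE (negbTE Hn) (negbTE H1) (negbTE H2) H3 eqxx (negbTE xu).
by apply: one; rewrite /nstep ffunE (negbTE Hn) (negbTE H1) (negbTE H2) (negbTE H3).
Qed.

Lemma acyc_relabel n (f g : 'I_n -> 'I_n) (r t : ptree n) :
  cancel g f -> (forall x, r (f x) = omap f (t x)) -> acyc t -> acyc r.
Proof.
move=> gK H ac.
have It : forall k x, iter k (fun o => obind r o) (Some (f x)) = omap f (iter k (fun o => obind t o) (Some x)).
  move=> k x; elim: k => [|k IH] //=; rewrite IH.
  by case: (iter k _ _) => //= z; rewrite H.
move=> y; have [k Hk] := ac (g y); exists k.
by rewrite -{1}(gK y) It Hk.
Qed.

Lemma swapvK n (u w x : 'I_n) : swapv u w (swapv u w x) = x.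
Proof.
rewrite /swapv; case: (eqVneq x u) => [->|xu]; first by rewrite eqxx; case: eqVneq.
case: (eqVneq x w) => [->|xw]; first by rewrite eqxx.
by rewrite (negbTE xu) (negbTE xw).
Qed.

Lemma swapv_inj n (f : 'I_n -> 'I_n) (u w x : 'I_n) : injective f ->
  f (swapv u w x) = swapv (f u) (f w) (f x).
Proof. by move=> fi; rewrite /swapv !(inj_eq fi); case: ifP => //; case: ifP. Qed.

Lemma omap_id' n (o : option 'I_n) : omap id o = o. Proof. by case: o. Qed.

Lemma part1 n (p : ptree n) : 0 < n -> acyc p -> delta p = tplus p.
Proof.
case: n p => // n p _ ac.
set w := (ord_max : 'I_n.+1).
have Hw : (w : nat) = n.+1.-1 by [].
have C := chain Hw (acyc_nl ac) (acyc_n2 ac) (add1n n) isT.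
have P : forall x, pim w 1 x = ordS x.
  move=> x; apply: ord_inj; rewrite val_pim //= /w.
  case: (eqVneq x ord_max) => [->|xw] /=; first by rewrite modnn.
  have : (x : nat) != n by apply/eqP => E; move: xw; rewrite -(inj_eq val_inj) /= E eqxx.
  have := ltn_ord x => ? ?; rewrite modn_small //; lia.
apply/ffunP => y; rewrite -(ord_predK y).
have := C (ord_pred y); rewrite P Sm_bot /delta => ->.
rewrite /tplus ffunE ordSK; case: (p _) => //= z; by rewrite P.
Qed.

Lemma acyc_sigma n (p : ptree n) i : acyc p -> 1 <= i -> i < n -> acyc (sigma i p).
Proof.
move=> ac i1 iN.
have hu : i.-1 < n by lia.
set u := Ordinal hu; set w := Ordinal iN.
have uw : u != w by apply/eqP => /(congr1 val) /=; lia.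
have nl := acyc_nl ac; have n2 := acyc_n2 ac.
have A := @sigma_step n i p p id u w i1 erefl erefl (@inj_id _) (fun x => esym (omap_id' (p x))) (nl w) (nl u)
   (introT implyP (fun h => n2 _ _ (eqP h))).
apply: (@acyc_relabel n (swapv u w) (swapv u w) _ (nstep u w p)).
- exact: swapvK.
- exact: A.
- exact: acyc_nstep.
Qed.

Lemma tplus_sigma n (p : ptree n) i : acyc p -> 1 <= i -> i.+1 < n ->
  tplus (sigma i p) = sigma i.+1 (tplus p).
Proof.
move=> ac i1 iN.
have hu : i.-1 < n by lia.
have hw : i < n by lia.
set u := Ordinal hu; set w := Ordinal hw.
have uw : u != w by apply/eqP => /(congr1 val) /=; lia.
have nl := acyc_nl ac; have n2 := acyc_n2 ac.
have H2 : (p w == Some u) ==> (p u != Some w) by apply/implyP => /eqP h; exact: n2 h.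
have A := @sigma_step n i p p id u w i1 erefl erefl (@inj_id _) (fun x => esym (omap_id' (p x))) (nl w) (nl u) H2.
have Hq : forall x, tplus p (ordS x) = omap (@ordS n) (p x) by move=> x; rewrite /tplus ffunE ordSK.
have Vu : val (ordS u) = i.+1.-1 by rewrite /= prednK // modn_small.
have Vw : val (ordS w) = i.+1 by rewrite /= modn_small.
have B := @sigma_step n i.+1 (tplus p) p (@ordS n) u w isT Vu Vw (@ordS_inj n) Hq (nl w) (nl u) H2.
apply/ffunP => z.
have -> : z = ordS (swapv u w (swapv u w (ord_pred z))) by rewrite swapvK ord_predK.
set x := swapv u w (ord_pred z).
have -> : tplus (sigma i p) (ordS (swapv u w x)) = omap (@ordS n) (sigma i p (swapv u w x)).
  by rewrite /tplus ffunE ordSK.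
rewrite A swapv_inj; last exact: ordS_inj.
rewrite B; case: (nstep u w p x) => //= y.
by rewrite swapv_inj //; exact: ordS_inj.
Qed.

Unset Implicit Arguments.

Theorem proposition1p3 (n : nat) (p : ptree n) :
  1 < n -> is_rooted_tree p ->
  delta p = tplus p /\
  (forall i : nat, 1 <= i <= n - 2 ->
     delta (sigma i p) = sigma i.+1 (delta p)).
Proof.
move=> n1 [_ ac].
have n0 : 0 < n by lia.
split; first exact: part1.
move=> i /andP[i1 i2].
have iN : i.+1 < n by lia.
rewrite part1 //; last by apply: acyc_sigma => //; lia.
by rewrite part1 // tplus_sigma.
Qed.
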